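(* Let $n\ge 3$, let $t$ be an indeterminate, and let $\rho'_S: SB_n\to GL_n(\mathbb{Z}[t^{\pm1}])$ be any representation extending the standard representation $\rho_S: B_n\to GL_n(\mathbb{Z}[t^{\pm1}])$ (equivalently, by the classification of such extensions, one given for some $a,c\in\mathbb{Z}[t^{\pm1}]$ by $\rho'_S(\sigma_i)=\mathrm{diag}(I_{i-1},\begin{pmatrix}0&t\\1&0\end{pmatrix},I_{n-i-1})$ and $\rho'_S(\tau_i)=\mathrm{diag}(I_{i-1},\begin{pmatrix}a&ct\\c&a\end{pmatrix},I_{n-i-1})$). Then $\rho'_S$ is not faithful.
   Context: $I_r$ is the $r\times r$ identity matrix. $B_n$ is the braid group with generators $\sigma_1,\dots,\sigma_{n-1}$ and relations $\sigma_i\sigma_{i+1}\sigma_i=\sigma_{i+1}\sigma_i\sigma_{i+1}$, $\sigma_i\sigma_j=\sigma_j\sigma_i$ ($|i-j|\ge2$). The singular braid group $SB_n\supset B_n$ is generated by $\sigma_1,\dots,\sigma_{n-1},\tau_1,\dots,\tau_{n-1}$ subject to the braid relations together with $\tau_i\tau_j=\tau_j\tau_i$, $\tau_i\sigma_j=\sigma_j\tau_i$ ($|i-j|\ge2$), $\tau_i\sigma_i=\sigma_i\tau_i$, $\sigma_i\sigma_{i+1}\tau_i=\tau_{i+1}\sigma_i\sigma_{i+1}$, $\sigma_{i+1}\sigma_i\tau_{i+1}=\tau_i\sigma_{i+1}\sigma_i$. The standard representation $\rho_S$ sends $\sigma_i$ to $\mathrm{diag}(I_{i-1},\begin{pmatrix}0&t\\1&0\end{pmatrix},I_{n-i-1})$.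 *)

(* Defs.v *)
From HB Require Import structures.
From mathcomp Require Import all_boot all_order all_algebra.
Set Implicit Arguments. Unset Strict Implicit. Unset Printing Implicit Defensive.
Import Order.TTheory GRing.Theory Num.Theory.


(** * Coefficients: Z[t^{+-1}] inside the fraction field Q(t) = {fraction {poly int}} *)
Definition Kt := {fraction {poly int}}.
Local Open Scope ring_scope.
Definition tK : Kt := tofrac ('X : {poly int}).
Definition laurent (x : Kt) : Prop :=
  exists (p : {poly int}) (k : nat), x = tofrac p / tK ^+ k.
Definition laurent_mx n (A : 'M[Kt]_n) : Prop := forall i j, laurent (A i j).
Definition GL_laurent n (A : 'M[Kt]_n) : Prop :=
  [/\ A \in unitmx, laurent_mx A & laurent_mx (invmx A)].

Local Close Scope ring_scope.
(** * Words in the generators of SB_n (0-based indices: Sig i is sigma_(i+1)). *)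
Inductive gen := Sig of nat | Tau of nat.
(** a letter is a generator together with an "inverse" flag *)
Definition letter := (gen * bool)%type.
Definition ltr (g : gen) : letter := (g, false).
Definition linv (x : letter) : letter := (x.1, ~~ x.2).
Definition gidx (g : gen) : nat := match g with Sig i => i | Tau i => i end.
Definition valid_word (n : nat) (w : seq letter) : Prop :=
  all (fun x : letter => (gidx x.1).+1 < n)%N w.

Definition far (i j : nat) : bool := (i.+1 < j) || (j.+1 < i).

Inductive sb_rel (n : nat) : seq letter -> seq letter -> Prop :=
| R_cancl x : (gidx x.1).+1 < n -> sb_rel n [:: x; linv x] [::]
| R_braid i : i.+2 < n ->
    sb_rel n [:: ltr (Sig i); ltr (Sig i.+1); ltr (Sig i)]
             [:: ltr (Sig i.+1); ltr (Sig i); ltr (Sig i.+1)]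
| R_ss i j : i.+1 < n -> j.+1 < n -> far i j ->
    sb_rel n [:: ltr (Sig i); ltr (Sig j)] [:: ltr (Sig j); ltr (Sig i)]
| R_tt i j : i.+1 < n -> j.+1 < n -> far i j ->
    sb_rel n [:: ltr (Tau i); ltr (Tau j)] [:: ltr (Tau j); ltr (Tau i)]
| R_ts i j : i.+1 < n -> j.+1 < n -> far i j ->
    sb_rel n [:: ltr (Tau i); ltr (Sig j)] [:: ltr (Sig j); ltr (Tau i)]
| R_ts_same i : i.+1 < n ->
    sb_rel n [:: ltr (Tau i); ltr (Sig i)] [:: ltr (Sig i); ltr (Tau i)]
| R_mix1 i : i.+2 < n ->
    sb_rel n [:: ltr (Sig i); ltr (Sig i.+1); ltr (Tau i)]
             [:: ltr (Tau i.+1); ltr (Sig i); ltr (Sig i.+1)]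
| R_mix2 i : i.+2 < n ->
    sb_rel n [:: ltr (Sig i.+1); ltr (Sig i); ltr (Tau i.+1)]
             [:: ltr (Tau i); ltr (Sig i.+1); ltr (Sig i)].

Inductive sb_eq (n : nat) : seq letter -> seq letter -> Prop :=
| sbe_rel u v w w' : sb_rel n w w' -> sb_eq n (u ++ w ++ v) (u ++ w' ++ v)
| sbe_refl w : sb_eq n w w
| sbe_sym w w' : sb_eq n w w' -> sb_eq n w' w
| sbe_trans w1 w2 w3 : sb_eq n w1 w2 -> sb_eq n w2 w3 -> sb_eq n w1 w3.

Local Open Scope ring_scope.
(** * Standard representation matrix of sigma_(i+1): diag(I_i, [[0,t],[1,0]], I) *)
Definition std_sigma (n i : nat) : 'M[Kt]_n :=
  \matrix_(r < n, c < n)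
    if (r == i :> nat) && (c == i.+1 :> nat) then tK
    else if (r == i.+1 :> nat) && (c == i :> nat) then 1
    else if ((r == i :> nat) || (r == i.+1 :> nat)) then 0
    else (r == c)%:R.

Definition gen_mx n (T : nat -> 'M[Kt]_n) (g : gen) : 'M[Kt]_n :=
  match g with Sig i => std_sigma n i | Tau i => T i end.
Definition letter_mx n (T : nat -> 'M[Kt]_n) (x : letter) : 'M[Kt]_n :=
  if x.2 then invmx (gen_mx T x.1) else gen_mx T x.1.
Definition word_mx n (T : nat -> 'M[Kt]_n) (w : seq letter) : 'M[Kt]_n :=
  foldr (fun x acc => letter_mx T x *m acc) 1%:M w.

Definition extends_std_rep (n : nat) (T : nat -> 'M[Kt]_n) : Prop :=
  (forall i, (i.+1 < n)%N -> GL_laurent (T i)) /\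
  (forall w w', sb_rel n w w' -> word_mx T w = word_mx T w').

Definition faithful_rep (n : nat) (T : nat -> 'M[Kt]_n) : Prop :=
  forall w w', valid_word n w -> valid_word n w' ->
    word_mx T w = word_mx T w' -> sb_eq n w w'.

(* Main.v *)
Require Import Defs.
From mathcomp Require Import all_boot all_order all_algebra.
From mathcomp Require Import zify.
Import GRing.Theory.

Definition w1 := [:: ltr (Sig 0); ltr (Sig 0); ltr (Sig 1); ltr (Sig 1)].
Definition w2 := [:: ltr (Sig 1); ltr (Sig 1); ltr (Sig 0); ltr (Sig 0)].

Section MX.
Local Open Scope ring_scope.

Definition dS (i : nat) (r : nat) : Kt := if (r == i) || (r == i.+1) then tK else 1.

Ltac cases := repeat (match goal with |- context [?a == ?b] => case: (@eqP nat a b) => ?; try subst; try (exfalso; lia) end).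

Lemma sq_sigma n i : (i.+1 < n)%N ->
  std_sigma n i *m std_sigma n i = diag_mx (\row_(r < n) dS i r).
Proof.
move=> hi; apply/matrixP => -[r hr] [c hc]; rewrite !mxE.
pose p := if (r == i :> nat) then i.+1 else if (r == i.+1 :> nat) then i else (r : nat).
have hp : (p < n)%N by rewrite /p; cases; lia.
pose k0 := Ordinal hp.
rewrite (bigD1 k0) //= big1 ?addr0; last first.
  move=> k /eqP hk; rewrite !mxE /=.
  have : (k : nat) <> p by move=> e; apply: hk; apply: val_inj.
  rewrite /p; clear; move: k => [k hk] /=.
  rewrite -!val_eqE /=.
  cases; move=> H; try lia; rewrite ?mul0r ?mulr0 //.
rewrite !mxE /= -!val_eqE /= /dS /p. clear k0 hp. clear p.
case: (r =P i) => [->|h1]; [|case: (r =P i.+1) => [->|h2]]; cases; try lia.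
all: rewrite ?mul0r ?mulr0 ?mulr1 ?mul1r ?mulr1n ?mulr0n //.
Qed.

Lemma w_eq n (T : nat -> 'M[Kt]_n) : (2 < n)%N -> word_mx T w1 = word_mx T w2.
Proof.
move=> hn; rewrite /word_mx /w1 /w2 /= /letter_mx /= !mulmx1.
have E : forall A B : 'M[Kt]_n, A *m (A *m (B *m B)) = (A *m A) *m (B *m B).
  by move=> A B; rewrite !mulmxA.
have h0 : (0 < n.-1)%N by lia.
have h1 : (1 < n.-1)%N by lia.
rewrite !E !(@sq_sigma n 0) ?(@sq_sigma n 1); try lia.
exact: diag_mxC.
Qed.

End MX.

From Stdlib Require Import ZArith Lia FunctionalExtensionality.

Definition actS (i : nat) (f : nat -> Z) : nat -> Z := fun k =>
  if k == i then (2 * f i - f i.+1)%Z else if k == i.+1 then f i else f k.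
Definition actSi (i : nat) (f : nat -> Z) : nat -> Z := fun k =>
  if k == i then f i.+1 else if k == i.+1 then (2 * f i.+1 - f i)%Z else f k.
Definition actL (x : letter) (f : nat -> Z) : nat -> Z :=
  if x.2 then actSi (gidx x.1) f else actS (gidx x.1) f.
Definition actW (w : seq letter) (f : nat -> Z) : nat -> Z :=
  foldr (fun x acc => actL x acc) f w.

Lemma actW_cat u v f : actW (u ++ v) f = actW u (actW v f).
Proof. by rewrite /actW foldr_cat. Qed.

Ltac crush := rewrite /actS /actSi;
  repeat (match goal with |- context [?a == ?b] => case: (@eqP nat a b) => ? end);
  subst; try lia.

Lemma rel_act n w w' : sb_rel n w w' -> forall f, actW w f = actW w' f.
Proof.
case=> [x _|i _|i j _ _ hf|i j _ _ hf|i j _ _ hf|i _|i _|i _] f;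
  apply: functional_extensionality => k; rewrite /actW /actL /=.
- case: x => g [] /=; crush.
- crush.
- move: hf; rewrite /far => /orP hf; crush.
- move: hf; rewrite /far => /orP hf; crush.
- move: hf; rewrite /far => /orP hf; crush.
- crush.
- crush.
- crush.
Qed.

Lemma eq_act n w w' : sb_eq n w w' -> forall f, actW w f = actW w' f.
Proof.
elim=> [u v w0 w0' /rel_act H|w0|w0 w0' _ IH|w1 w2 w3 _ IH1 _ IH2] f //.
- by rewrite !actW_cat H.
- by rewrite IH1.
Qed.

Definition e0 (k : nat) : Z := if k == 0 then 1%Z else 0%Z.

Theorem theorem4p4 (n : nat) (T : nat -> 'M[Kt]_n) :
  3 <= n -> extends_std_rep T -> ~ faithful_rep T.
Proof.
move=> hn _ hf.
have vw1 : valid_word n w1 by rewrite /valid_word /= !(leq_trans _ hn).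
have vw2 : valid_word n w2 by rewrite /valid_word /= !(leq_trans _ hn).
have := @eq_act n w1 w2 (hf _ _ vw1 vw2 (@w_eq n T hn)) e0.
move=> H; have := f_equal (fun g : nat -> Z => g 1) H.
by vm_compute.
Qed.
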